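(* Let $G$ be a graph and let $G_r$ be the reduced graph of $G$. Then $box(G)\leq |V(G_r)|$.
   Context: All graphs are simple, finite and undirected. For a graph $G$, define $x\sim_G y$ iff $N(x)=N(y)$ (equal open neighbourhoods); this is an equivalence relation and $[x]$ denotes the class of $x$. The reduced graph $G_r$ has the equivalence classes as vertices, with distinct classes $[x]$ and $[y]$ adjacent iff $x$ and $y$ are adjacent in $G$. The boxicity $box(G)$ is the least positive integer $\ell$ such that $G$ is isomorphic to the intersection graph of a family of $\ell$-boxes (Cartesian products of $\ell$ closed bounded real intervals). *)

(* Defs.v *)
From Stdlib Require Import Reals.
From mathcomp Require Import all_boot.
Set Implicit Arguments. Unset Strict Implicit. Unset Printing Implicit Defensive.

Definition simple_graph (T : finType) (e : rel T) : Prop :=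
  symmetric e /\ irreflexive e.

Definition nbhd (T : finType) (e : rel T) (x : T) : {set T} := [set y | e x y].

Definition same_nbhd (T : finType) (e : rel T) (x y : T) : bool :=
  nbhd e x == nbhd e y.

Definition nclass (T : finType) (e : rel T) (x : T) : {set T} :=
  [set y | same_nbhd e x y].

Definition reduced_vertices (T : finType) (e : rel T) : {set {set T}} :=
  [set nclass e x | x : T].

Definition reduced_adj (T : finType) (e : rel T) (A B : {set T}) : Prop :=
  A \in reduced_vertices e /\ B \in reduced_vertices e /\ A <> B /\
  exists x y, A = nclass e x /\ B = nclass e y /\ e x y.

Record box (l : nat) := Box {
  lo : 'I_l -> R;
  hi : 'I_l -> R;
  lo_le_hi : forall i, Rle (lo i) (hi i) }.

Definition in_box (l : nat) (B : box l) (p : 'I_l -> R) : Prop :=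
  forall i, Rle (lo B i) (p i) /\ Rle (p i) (hi B i).

Definition boxes_meet (l : nat) (B1 B2 : box l) : Prop :=
  exists p : 'I_l -> R, in_box B1 p /\ in_box B2 p.

Definition box_representable (T : finType) (e : rel T) (l : nat) : Prop :=
  exists f : T -> box l, forall x y, x != y -> (e x y <-> boxes_meet (f x) (f y)).

Definition is_boxicity (T : finType) (e : rel T) (b : nat) : Prop :=
  (0 < b)%N /\ box_representable e b /\
  forall l, (0 < l)%N -> box_representable e l -> (b <= l)%N.

(* Main.v *)
Require Import Defs.
From Stdlib Require Import Reals.
From mathcomp Require Import all_boot.
From Stdlib Require Import Lra Classical.

Lemma meet_iff l (B1 B2 : box l) : boxes_meet B1 B2 <->
  forall i, Rle (lo B1 i) (hi B2 i) /\ Rle (lo B2 i) (hi B1 i).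
Proof.
split.
- move=> [p [H1 H2]] i; move: (H1 i) (H2 i) => [? ?] [? ?]; split; lra.
- move=> H; exists (fun i => Rmax (lo B1 i) (lo B2 i)); split=> i;
  have := H i; have := lo_le_hi B1 i; have := lo_le_hi B2 i;
  have := Rmax_l (lo B1 i) (lo B2 i); have := Rmax_r (lo B1 i) (lo B2 i);
  move=> ? ? ? ? [? ?]; split=> //; apply: Rmax_lub; lra.
Qed.

Section Constr.
Variables (T : finType) (e : rel T).

Definition adjC (C : {set T}) v := [exists w in C, e v w].
Definition rk (v : T) : R := INR (nat_of_ord (enum_rank v)).+1.
Definition loC (C : {set T}) v : R := if v \in C then rk v else (IZR Z0).
Definition hiC (C : {set T}) v : R :=
  if v \in C then rk v else if adjC C v then INR (#|T|.+1) else (IZR Z0).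

Lemma rk_pos v : Rlt (IZR Z0) (rk v).
Proof. rewrite /rk; apply: lt_0_INR; apply/ltP. by []. Qed.

Lemma rk_le v : Rle (rk v) (INR (#|T|.+1)).
Proof. rewrite /rk; apply: le_INR; apply/leP; apply: ltnW; by rewrite ltnS. Qed.

Lemma rk_inj v w : rk v = rk w -> v = w.
Proof. rewrite /rk => /INR_eq [] /val_inj; exact: enum_rank_inj. Qed.

Lemma loC_le_hiC C v : Rle (loC C v) (hiC C v).
Proof.
rewrite /loC /hiC; case: (v \in C); first lra.
case: (adjC C v); [apply: pos_INR | lra].
Qed.

Definition mkbox (k : nat) (F : 'I_k -> {set T}) (v : T) : box k :=
  @Box k (fun i => loC (F i) v) (fun i => hiC (F i) v) (fun i => loC_le_hiC (F i) v).

Lemma cond_iff C x y : x != y ->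
  (Rle (loC C x) (hiC C y) /\ Rle (loC C y) (hiC C x)) <->
  (if x \in C then (y \notin C) && adjC C y else if y \in C then adjC C x else true).
Proof.
move=> nxy; have := rk_pos x; have := rk_pos y; have := rk_le x; have := rk_le y.
have := pos_INR (#|T|.+1).
rewrite /loC /hiC; case: (x \in C); case: (y \in C) => /=.
- move=> *; split=> //; move=> [? ?].
  have : rk x = rk y by lra.
  by move/rk_inj => exy; move: nxy; rewrite exy eqxx.
- case: (adjC C y) => /= *; split=> [[? ?]|?] //; try (split; lra); lra.
- case: (adjC C x) => /= *; split=> [[? ?]|?] //; try (split; lra); lra.
- move=> *; split=> // _; case: (adjC C x); case: (adjC C y); split; lra.
Qed.

End Constr.

Lemma represent (T : finType) (e : rel T) (x0 : T) :
  simple_graph e -> box_representable e #|reduced_vertices e|.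
Proof.
move=> [esym eirr].
have cls : forall x, nclass e x \in reduced_vertices e by move=> x; apply: imset_f.
pose F := fun i : 'I_#|reduced_vertices e| => (enum_val i : {set T}).
exists (@mkbox T e _ F) => x y nxy.
rewrite meet_iff /=.
split.
- move=> exy i.
  apply/(@cond_iff T e _ _ _ nxy).
  have : F i \in reduced_vertices e by apply: enum_valP.
  move=> /imsetP [z _ Fz]; rewrite Fz.
  have inN : forall u, (u \in nclass e z) = (nbhd e z == nbhd e u).
    by move=> u; rewrite /nclass inE.
  case xC: (x \in nclass e z); case yC: (y \in nclass e z) => //=.
  + move: xC yC; rewrite !inN => /eqP -> /eqP eN.
    have : y \in nbhd e x by rewrite inE.
    by rewrite eN inE eirr.
  + by apply/existsP; exists x; rewrite xC /= esym.
  + by apply/existsP; exists y; rewrite yC /= exy.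
- move=> H.
  pose i := enum_rank_in (cls x) (nclass e x).
  have Fi : F i = nclass e x by rewrite /F /i enum_rankK_in.
  have := H i; move/(@cond_iff T e _ _ _ nxy); rewrite Fi.
  have xx : x \in nclass e x by rewrite inE /same_nbhd eqxx.
  rewrite xx => /andP [_ /existsP [w /andP [wC ew]]].
  move: wC; rewrite inE /same_nbhd => /eqP eN.
  have : y \in nbhd e w by rewrite inE esym.
  by rewrite -eN inE.
Qed.

Lemma minimal (T : finType) (e : rel T) n : forall l, (l <= n)%N -> (0 < l)%N ->
  box_representable e l -> exists b, is_boxicity e b /\ (b <= l)%N.
Proof.
elim: n => [|n IH] l hl l0 rl.
- by case: l hl l0 rl.
- case: (classic (exists l', (l' < l)%N /\ (0 < l')%N /\ box_representable e l')).
  + move=> [l' [h1 [h2 h3]]].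
    have h : (l' <= n)%N by rewrite -ltnS; apply: leq_trans h1 hl.
    have [b [hb bl]] := IH l' h h2 h3.
    by exists b; split=> //; apply: leq_trans bl (ltnW h1).
  + move=> Hn; exists l; split=> //; split=> //; split=> // l' l'0 rl'.
    rewrite leqNgt; apply/negP => lt; apply: Hn; by exists l'.
Qed.

Theorem corollary3p2 (T : finType) (e : rel T) :
  simple_graph e -> (0 < #|T|)%N ->
  exists b, is_boxicity e b /\ (b <= #|reduced_vertices e|)%N.
Proof.
move=> sg /card_gt0P [x0 _].
apply: (@minimal _ _ #|reduced_vertices e|) => //.
- apply/card_gt0P; exists (nclass e x0); exact: imset_f.
- exact: represent x0 sg.
Qed.
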